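(* Let $X$ be a real Banach space with a normalized unconditional basis $\mathcal B=(e_n)_{n=1}^\infty$ with biorthogonal functionals $(e_n^* )$ and unconditional constant $M$, and let $\mathcal E=(\varepsilon_n)_{n=1}^\infty$ be a sequence of nonnegative numbers. Let $x_0$ be an extreme point of the brick $K_{\mathcal B,\mathcal E}$. Then $\|x\|\le M\|x_0\|$ for every $x\in K_{\mathcal B,\mathcal E}$. In particular, if $\mathcal B$ is $1$-unconditional then $\|x\|\le\|x_0\|$ for every $x\in K_{\mathcal B,\mathcal E}$.
   Context: The brick is $K_{\mathcal B,\mathcal E}=\{x\in X:\ |e_n^*(x)|\le\varepsilon_n \text{ for all } n\}$. A point $x_0\in A$ is an extreme point of $A$ if for every nonzero $x\in X$ there is $\lambda\in[-1,1]$ with $x_0+\lambda x\notin A$. For an unconditional basis and a sign sequence $\Theta=(\theta_n)$, $\theta_n=\pm1$, let $M_\Theta x=\sum_n\theta_ne_n^*(x)e_n$; the unconditional constant is $\sup_\Theta\|M_\Theta\|$, and the basis is $1$-unconditional if this constant equals $1$. *)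

(* Defs.v *)
From HB Require Import structures.
From mathcomp Require Import all_boot all_order all_algebra.
From mathcomp Require Import all_classical all_reals all_analysis.
Set Implicit Arguments. Unset Strict Implicit. Unset Printing Implicit Defensive.
Import Order.TTheory GRing.Theory Num.Theory.
Import numFieldNormedType.Exports.
Local Open Scope classical_set_scope.
Local Open Scope ring_scope.

Section Defs.
Context {R : realType} {X : completeNormedModType R}.

Definition schauder_basis (e : nat -> X) (es : nat -> X -> R) : Prop :=
  [/\ (forall n (a : R) (x y : X), es n (a *: x + y) = a * es n x + es n y),
      (forall n, continuous (es n)),
      (forall n m, es n (e m) = if n == m then 1 else 0) &
      (forall x : X, series (fun k => es k x *: e k) @ \oo --> x)].

Definition normalized (e : nat -> X) : Prop := forall n, `|e n| = 1.

Definition sign_seq (theta : nat -> R) : Prop :=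
  forall n, theta n = 1 \/ theta n = -1.

Definition MTheta_is (e : nat -> X) (es : nat -> X -> R)
  (theta : nat -> R) (x y : X) : Prop :=
  series (fun k => (theta k * es k x) *: e k) @ \oo --> y.

Definition unconditional_basis (e : nat -> X) (es : nat -> X -> R) : Prop :=
  schauder_basis e es /\
  forall theta x, sign_seq theta -> exists y, MTheta_is e es theta x y.

Definition bounds_all_MTheta (e : nat -> X) (es : nat -> X -> R) (c : R) : Prop :=
  forall theta x y, sign_seq theta -> MTheta_is e es theta x y -> `|y| <= c * `|x|.

Definition unconditional_constant (e : nat -> X) (es : nat -> X -> R) (M : R) : Prop :=
  bounds_all_MTheta e es M /\ forall c, bounds_all_MTheta e es c -> M <= c.

Definition brick (es : nat -> X -> R) (eps : nat -> R) : set X :=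
  [set x | forall n, `|es n x| <= eps n].

Definition extreme_point (A : set X) (x0 : X) : Prop :=
  A x0 /\ forall x : X, x != 0 ->
    exists lam : R, -1 <= lam <= 1 /\ ~ A (x0 + lam *: x).

End Defs.

(* Main.v *)
Require Import Defs.
From HB Require Import structures.
From mathcomp Require Import all_boot all_order all_algebra.
From mathcomp Require Import all_classical all_reals all_analysis.
From mathcomp Require Import ring lra.
Import Order.TTheory GRing.Theory Num.Theory.
Import numFieldNormedType.Exports.
Local Open Scope classical_set_scope.
Local Open Scope ring_scope.

Theorem proposition2p8 (R : realType) (X : completeNormedModType R)
  (e : nat -> X) (es : nat -> X -> R) (M : R) (eps : nat -> R) (x0 : X) :
  unconditional_basis e es -> normalized e ->
  unconditional_constant e es M ->
  (forall n, 0 <= eps n) ->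
  extreme_point (brick es eps) x0 ->
  (forall x, brick es eps x -> `|x| <= M * `|x0|) /\
  (M = 1 -> forall x, brick es eps x -> `|x| <= `|x0|).
Proof.
move=> [[lin _ bio sch] unc] nrm [bnd _] eps0 [bx0 ext].
have lin1 : forall n a (x : X), es n (a *: e n + x) = a + es n x.
  by move=> n a x; rewrite lin bio eqxx mulr1.
have lin2 : forall n m a (x : X), n != m -> es m (a *: e n + x) = es m x.
  by move=> n m a x nm; rewrite lin bio eq_sym (negbTE nm) mulr0 add0r.
have full : forall n, `|es n x0| = eps n.
  move=> n; apply/eqP; rewrite eq_le bx0 /=; rewrite leNgt; apply/negP => lt.
  set d := eps n - `|es n x0|.
  have d0 : 0 < d by rewrite subr_gt0.
  have nz : d *: e n != 0.
    by rewrite scaler_eq0 negb_or gt_eqF //= -normr_eq0 nrm oner_eq0.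
  have [lam [/andP [l1 l2] nb]] := ext _ nz.
  apply: nb => m.
  rewrite addrC scalerA.
  have [<-|nm] := eqVneq n m.
    rewrite lin1; apply: le_trans (ler_normD _ _) _.
    rewrite normrM (ger0_norm (ltW d0)).
    have h : `|lam| * d <= d.
      by rewrite -[X in _ <= X]mul1r ler_pM2r // ler_norml l1 l2.
    apply: le_trans (lerD h (lexx _)) _; by rewrite /d subrK.
  by rewrite (lin2 _ _ _ _ nm).
pose b k := es k x0.
have key : forall N (u : nat -> R), (forall n, -1 <= u n <= 1) ->
    (forall n, (N <= n)%N -> u n = 1 \/ u n = -1) ->
    exists y, series (fun k => (u k * b k) *: e k) @ \oo --> y /\
              `|y| <= M * `|x0|.
  elim => [|N IH] u ub us.
    have su : sign_seq u by move=> n; exact: us.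
    have [y hy] := unc u x0 su.
    by exists y; split => //; exact: bnd hy.
  pose up n := if n == N then 1 else u n.
  pose um n := if n == N then -1 else u n.
  have [yp [cp np]] : exists y, series (fun k => (up k * b k) *: e k) @ \oo --> y /\
              `|y| <= M * `|x0|.
    apply: IH.
    - move=> n; rewrite /up; case: (n =P N) => [_|nN]; last exact: ub.
      by apply/andP; split; lra.
    - move=> n Nn; rewrite /up; case: (n =P N) => [_|nN]; first by left.
      by apply: us; rewrite ltn_neqAle Nn andbT; apply/eqP => h; apply: nN.
  have [ym [cm nm]] : exists y, series (fun k => (um k * b k) *: e k) @ \oo --> y /\
              `|y| <= M * `|x0|.
    apply: IH.
    - move=> n; rewrite /um; case: (n =P N) => [_|nN]; last exact: ub.
      by apply/andP; split; lra.
    - move=> n Nn; rewrite /um; case: (n =P N) => [_|nN]; first by right.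
      by apply: us; rewrite ltn_neqAle Nn andbT; apply/eqP => h; apply: nN.
  pose lam := (1 + u N) / 2.
  have l0 : 0 <= lam by have := ub N; rewrite /lam => /andP [h1 h2]; lra.
  have l1 : lam <= 1 by have := ub N; rewrite /lam => /andP [h1 h2]; lra.
  have feq : (fun k => (u k * b k) *: e k) =
     lam *: (fun k => (up k * b k) *: e k) + (1 - lam) *: (fun k => (um k * b k) *: e k).
    apply/funext => k; rewrite !fctE !scalerA -scalerDl; congr (_ *: _).
    rewrite /up /um; by case: (k =P N) => [->|_]; rewrite /lam; field.
  exists (lam *: yp + (1 - lam) *: ym).
  split.
    rewrite feq seriesD !seriesZ; apply: cvgD; exact: cvgZl_tmp.
  apply: le_trans (ler_normD _ _) _.
  have l2 : 0 <= 1 - lam by rewrite subr_ge0.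
  clearbody lam; rewrite !normrZ (ger0_norm l0) (ger0_norm l2).
  have := ler_wpM2l l0 np; have := ler_wpM2l l2 nm.
  lra.
have main : forall x, brick es eps x -> `|x| <= M * `|x0|.
  move=> x bx.
  pose u n := if b n == 0 then 1 else es n x / b n.
  have xu : forall n, es n x = u n * b n.
    move=> n; rewrite /u; case: eqP => [b0|b0]; last by rewrite mulfVK //; apply/eqP.
    have := bx n; rewrite -full -/(b n) b0 normr0 normr_le0 => /eqP ->.
    by rewrite mulr0.
  have ub : forall n, -1 <= u n <= 1.
    move=> n; rewrite /u; case: eqP => [_|b0]; first by apply/andP; split; lra.
    rewrite -ler_norml normrM normfV ler_pdivrMr ?normr_gt0; last by apply/eqP.
    by rewrite mul1r /b full.
  have SN : forall N, `|series (fun k => es k x *: e k) N| <= M * `|x0|.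
    move=> N.
    pose u1 n := if (n < N)%N then u n else 1.
    pose u2 n := if (n < N)%N then u n else -1.
    have [y1 [c1 n1]] := key N u1
      (fun n => if (n < N)%N as c return -1 <= (if c then u n else 1) <= 1 then ub n
                else ltac:(apply/andP; split; lra))
      (fun n Nn => ltac:(rewrite /u1 ltnNge Nn /=; by left)).
    have [y2 [c2 n2]] := key N u2
      (fun n => if (n < N)%N as c return -1 <= (if c then u n else -1) <= 1 then ub n
                else ltac:(apply/andP; split; lra))
      (fun n Nn => ltac:(rewrite /u2 ltnNge Nn /=; by right)).
    pose c k := if (k < N)%N then es k x *: e k else 0.
    have ceq : c = 2^-1 *: ((fun k => (u1 k * b k) *: e k) + (fun k => (u2 k * b k) *: e k)).
      apply/funext => k; rewrite !fctE /c /u1 /u2.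
      case: ifP => _; last by rewrite -scalerDl mul1r mulN1r subrr scale0r scaler0.
      by rewrite -scalerDl scalerA xu; congr (_ *: _); field.
    have cc : series c @ \oo --> 2^-1 *: (y1 + y2).
      by rewrite ceq seriesZ seriesD; apply: cvgZl_tmp; apply: cvgD.
    have zb : `|2^-1 *: (y1 + y2)| <= M * `|x0|.
      rewrite normrZ; have := ler_normD y1 y2.
      have h2 : `|2^-1 : R| = 2^-1 by rewrite ger0_norm // invr_ge0.
      rewrite h2; lra.
    apply: le_trans zb.
    apply: (ler_cvg_to (cvg_cst _) (cvg_norm cc)).
    near=> n.
    have Nn : (N <= n)%N by near: n; exact: nbhs_infty_ge.
    rewrite !seriesEnat /= (big_cat_nat (leq0n N) Nn) /=.
    have -> : \sum_(N <= i < n) c i = 0.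
      rewrite big_nat_cond big1 // => k /andP [/andP [Nk _] _].
      by rewrite /c ltnNge Nk.
    rewrite addr0 (@eq_big_nat _ _ _ 0 N c (fun k => es k x *: e k)) //.
    by move=> k /andP [_ kN]; rewrite /c kN.
  have h : `|series (fun k => es k x *: e k) n| @[n --> \oo] --> `|x|.
    by apply: cvg_norm; exact: sch.
  have := ler_cvg_to h (cvg_cst (M * `|x0|)); apply.
  by near=> n; apply: SN.
split => // M1 x bx; by rewrite -[`|x0|]mul1r -M1 main.
Unshelve. all: end_near.
Qed.
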